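(* There are absolute constants $c_0,c>0$ such that the following holds. Let $\mathcal{F}$ be a finite class of functions $\mathcal{S}\times\mathcal{A}\to[0,V_{\max}]$, $\Pi$ a finite class of policies, and $\pi_{\mathrm{cp}}\in\Pi$. Assume (1) $C_{\pi_{\mathrm{cp}}}:=\|d^{\pi_{\mathrm{cp}}}/d^D\|_\infty<\infty$ and $\mathcal{T}^{\pi_{\mathrm{cp}}}f\in\mathcal{F}$ for all $f\in\mathcal{F}$; (2) $Q^\pi\in\mathcal{F}$ for all $\pi\in\Pi$. Let $\mathcal{D}$ consist of $n$ i.i.d. samples from $D$, let $\delta\in(0,1)$, $\epsilon_0=c_0V_{\max}^2\log(|\mathcal{F}||\Pi|/\delta)/n$, and for $\pi\in\Pi$ define the version space $\mathcal{F}^\pi_{\epsilon_0}=\{f\in\mathcal{F}:\widehat{\mathcal{E}}(f;\pi)\le\epsilon_0\}$ and $J^-_{\mathrm{VS}}(\pi)=\min_{f\in\mathcal{F}^\pi_{\epsilon_0}}J_f(\pi)$ (with $\min\emptyset=+\infty$). Let $\hat\pi\in\arg\max_{\pi\in\Pi}J^-_{\mathrm{VS}}(\pi)$. Then with probability at least $1-\delta$, $$J(\pi_{\mathrm{cp}})-J(\hat\pi)\le c\,\frac{V_{\max}}{1-\gamma}\sqrt{\frac{C_{\pi_{\mathrm{cp}}}\log(|\mathcal{F}||\Pi|/\delta)}{n}}.$$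
   Context: MDP $(\mathcal{S},\mathcal{A},P,R,\gamma,d_0)$ with finite $\mathcal{S},\mathcal{A}$, deterministic reward $R:\mathcal{S}\times\mathcal{A}\to[0,R_{\max}]$, $\gamma\in[0,1)$, $V_{\max}=R_{\max}/(1-\gamma)$. For a policy $\pi$: $J(\pi)=\mathbb{E}_\pi[\sum_t\gamma^tr_t]$; $Q^\pi(s,a)=\mathbb{E}_\pi[\sum_t\gamma^tr_t\mid s_0=s,a_0=a]$; $f(s,\pi)=\sum_a\pi(a\mid s)f(s,a)$; $J_f(\pi)=\mathbb{E}_{s\sim d_0}[f(s,\pi)]$; $(\mathcal{T}^\pi f)(s,a)=R(s,a)+\gamma\mathbb{E}_{s'\sim P(\cdot\mid s,a)}[f(s',\pi)]$; $d^\pi(s,a)=(1-\gamma)\sum_{t\ge0}\gamma^t\Pr_\pi[s_t=s,a_t=a]$. Data distribution $d^D\in\Delta(\mathcal{S}\times\mathcal{A})$; $D$ is the distribution of $(s,a,r,s')$ with $(s,a)\sim d^D$, $r=R(s,a)$, $s'\sim P(\cdot\mid s,a)$. $\|d^\pi/d^D\|_\infty=\max_{s,a}d^\pi(s,a)/d^D(s,a)$ ($0/0=0$, nonzero$/0=\infty$). Empirical losses on dataset $\mathcal{D}$: $\widehat{\mathcal{L}}(f';f,\pi)=\frac{1}{|\mathcal{D}|}\sum_{(s,a,r,s')\in\mathcal{D}}(f'(s,a)-r-\gamma f(s',\pi))^2$ and $\widehat{\mathcal{E}}(f;\pi)=\max_{g\in\mathcal{F}}\big[\widehat{\mathcal{L}}(f;f,\pi)-\widehat{\mathcal{L}}(g;f,\pi)\big]$.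 Ties are broken arbitrarily. *)

(* Defs.v *)
From HB Require Import structures.
From mathcomp Require Import all_boot all_order all_algebra.
From mathcomp Require Import all_classical all_reals.
From mathcomp Require Import ereal topology normedtype sequences exp.
Set Implicit Arguments.
Unset Strict Implicit.
Unset Printing Implicit Defensive.
Import Order.TTheory GRing.Theory Num.Theory.
Import numFieldNormedType.Exports.
Local Open Scope ring_scope.

Definition rseries_sum (R : realType) (u : nat -> R) : R := limn (series u).

Section MDP.
Variables (R : realType) (S A : finType).

(* A (stochastic) policy: pi s a = pi(a|s). *)
Definition policy := {ffun S -> {ffun A -> R}}.
Definition qfun := {ffun S * A -> R}.
(* One transition sample (s, a, s'); the reward is r = Rw s a. *)
Definition sample := (S * A * S)%type.

Definition is_dist_S (d : {ffun S -> R}) := (forall s, 0 <= d s) /\ \sum_s d s = 1.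
Definition is_dist_SA (d : {ffun S * A -> R}) := (forall x, 0 <= d x) /\ \sum_x d x = 1.
Definition is_policy (pi : policy) :=
  forall s, (forall a, 0 <= pi s a) /\ \sum_a pi s a = 1.
Definition is_kernel (P : S -> A -> {ffun S -> R}) :=
  forall s a, is_dist_S (P s a).

Variables (P : S -> A -> {ffun S -> R}) (Rw : S -> A -> R) (gamma : R).

Definition fpol (f : qfun) (s : S) (pi : policy) : R := \sum_a pi s a * f (s, a).

Definition Jf (d0 : {ffun S -> R}) (f : qfun) (pi : policy) : R :=
  \sum_s d0 s * fpol f s pi.

Definition bellman (pi : policy) (f : qfun) : qfun :=
  [ffun x : S * A => Rw x.1 x.2 + gamma * \sum_s' P x.1 x.2 s' * fpol f s' pi].

Fixpoint sa_dist (pi : policy) (mu0 : S * A -> R) (t : nat) : S * A -> R :=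
  match t with
  | 0 => mu0
  | t'.+1 => fun y => \sum_(x : S * A) sa_dist pi mu0 t' x * P x.1 x.2 y.1 * pi y.1 y.2
  end.

Definition init_dist (d0 : {ffun S -> R}) (pi : policy) : S * A -> R :=
  fun x => d0 x.1 * pi x.1 x.2.

Definition point_dist (s : S) (a : A) : S * A -> R :=
  fun x => if x == (s, a) then 1 else 0.

Definition exp_reward (pi : policy) (mu0 : S * A -> R) (t : nat) : R :=
  \sum_(x : S * A) sa_dist pi mu0 t x * Rw x.1 x.2.

Definition Jpi (d0 : {ffun S -> R}) (pi : policy) : R :=
  rseries_sum (fun t => gamma ^+ t * exp_reward pi (init_dist d0 pi) t).

Definition Qpi (pi : policy) : qfun :=
  [ffun x : S * A => rseries_sum (fun t => gamma ^+ t * exp_reward pi (point_dist x.1 x.2) t)].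

Definition dpi (d0 : {ffun S -> R}) (pi : policy) : {ffun S * A -> R} :=
  [ffun x : S * A => (1 - gamma) * rseries_sum (fun t => gamma ^+ t * sa_dist pi (init_dist d0 pi) t x)].

(* ||d^pi/d^D||_inf < oo  (nonzero/0 = oo) *)
Definition conc_finite (d0 : {ffun S -> R}) (dD : {ffun S * A -> R}) (pi : policy) :=
  forall x, dD x = 0 -> dpi d0 pi x = 0.

(* ||d^pi/d^D||_inf (all ratios are >= 0; 0/0 = 0 as in MathComp) *)
Definition conc (d0 : {ffun S -> R}) (dD : {ffun S * A -> R}) (pi : policy) : R :=
  \big[Num.max/0]_(x : S * A) (dpi d0 pi x / dD x).

Definition emp_loss n (data : {ffun 'I_n -> sample}) (f' f : qfun) (pi : policy) : R :=
  n%:R^-1 * \sum_(i < n)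
    (f' ((data i).1.1, (data i).1.2) - Rw (data i).1.1 (data i).1.2
       - gamma * fpol f (data i).2 pi) ^+ 2.

(* E^(f; pi) = max_{g in F} [L^(f;f,pi) - L^(g;f,pi)]  (F nonempty; the default 0
   is attained by g = f whenever f \in F) *)
Definition emp_err n (F : seq qfun) (data : {ffun 'I_n -> sample}) (f : qfun) (pi : policy) : R :=
  \big[Num.max/0]_(g <- F) (emp_loss data f f pi - emp_loss data g f pi).

Definition Jminus_VS n (d0 : {ffun S -> R}) (F : seq qfun) (eps0 : R)
    (data : {ffun 'I_n -> sample}) (pi : policy) : \bar R :=
  \big[mine/+oo%E]_(f <- F | emp_err F data f pi <= eps0) ((Jf d0 f pi)%:E).

(* Probability, under n i.i.d. draws (s,a) ~ dD, s' ~ P(.|s,a), of an event *)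
Definition prob_data n (dD : {ffun S * A -> R}) (E : {ffun 'I_n -> sample} -> bool) : R :=
  \sum_(data : {ffun 'I_n -> sample} | E data)
     \prod_(i < n) (dD ((data i).1.1, (data i).1.2) * P (data i).1.1 (data i).1.2 (data i).2).

End MDP.

(* Main.v *)
Require Import Defs.
From HB Require Import structures.
From mathcomp Require Import all_boot all_order all_algebra.
From mathcomp Require Import all_classical all_reals.
From mathcomp Require Import ereal topology normedtype sequences exp.
From mathcomp Require Import ring lra.
Import Order.TTheory GRing.Theory Num.Theory.
Import numFieldNormedType.Exports.
Set Implicit Arguments.
Unset Strict Implicit.
Unset Printing Implicit Defensive.
Local Open Scope ring_scope.

Module M1.

Local Open Scope classical_set_scope.

Section SeriesFacts.
Variable R : realType.

Lemma rs_lim (u : nat -> R) (l : R) : series u @ \oo --> l -> rseries_sum u = l.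
Proof. by move=> h; rewrite /rseries_sum; apply: cvg_lim. Qed.

Lemma cvg_bigsum (I : Type) (r : seq I) (f : I -> nat -> R) (l : I -> R) :
  (forall i, f i n @[n --> \oo] --> l i) ->
  (\sum_(i <- r) f i n) @[n --> \oo] --> \sum_(i <- r) l i.
Proof.
move=> h; elim: r => [|a r IH].
  rewrite big_nil; under eq_fun do rewrite big_nil; exact: cvg_cst.
rewrite big_cons; under eq_fun do rewrite big_cons.
exact: (cvgD (h a) IH).
Qed.

Lemma seriesE (u : nat -> R) n : series u n = \sum_(0 <= k < n) u k.
Proof. by []. Qed.

Lemma series_lin (I : finType) (c : I -> R) (u : I -> nat -> R) (l : I -> R) :
  (forall i, series (u i) @ \oo --> l i) ->
  series (fun t => \sum_i c i * u i t) @ \oo --> \sum_i c i * l i.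
Proof.
move=> h.
have -> : series (fun t => \sum_i c i * u i t) = fun N => \sum_i c i * series (u i) N.
  apply: funext => N; rewrite seriesE exchange_big /=; apply: eq_bigr => i _.
  by rewrite seriesE mulr_sumr.
apply: cvg_bigsum => i; exact: cvgMl_tmp.
Qed.

Lemma geom_partial (g : R) N : 0 <= g < 1 -> \sum_(0 <= k < N) g ^+ k <= (1 - g)^-1.
Proof.
move=> /andP[g0 g1].
have e := geometric_seriesE 1 (negbT (lt_eqF g1)) .
have := congr1 (fun f => f N) e; rewrite /= => e2.
have -> : \sum_(0 <= k < N) g ^+ k = series (geometric 1 g) N.
  by rewrite seriesE; apply: eq_bigr => k _; rewrite /geometric /= mul1r.
rewrite e2 mul1r ler_pdivrMr ?subr_gt0 // mulVf ?subr_eq0 ?gt_eqF //.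
rewrite lerBlDr lerDl; exact: exprn_ge0.
Qed.

Lemma cvg_bounded_series (g M : R) (u : nat -> R) : 0 <= g < 1 ->
  (forall t, 0 <= u t <= M * g ^+ t) ->
  series u @ \oo --> rseries_sum u.
Proof.
move=> hg hu.
have : cvgn (series u).
  apply: nondecreasing_is_cvgn.
    by apply: nondecreasing_series => k _ _; case/andP: (hu k).
  exists (M * (1 - g)^-1) => _ [N _ <-].
  rewrite seriesE.
  have M0 : 0 <= M.
    case/andP: (hu 0%N) => a b; rewrite expr0 mulr1 in b; exact: le_trans a b.
  apply: (le_trans (y := \sum_(0 <= k < N) M * g ^+ k)).
    by apply: ler_sum => k _; case/andP: (hu k).
  rewrite -mulr_sumr; apply: ler_wpM2l => //; exact: geom_partial.
by [].
Qed.

Lemma rs_ge0 (u : nat -> R) : (forall t, 0 <= u t) -> cvgn (series u) -> 0 <= rseries_sum u.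
Proof.
move=> h c; have := nondecreasing_cvgn_le (nondecreasing_series (fun k _ _ => h k)) c 0%N.
by rewrite /rseries_sum /= big_geq.
Qed.

Lemma rs_shift (u : nat -> R) (l : R) : series u @ \oo --> l ->
  series (fun t => u t.+1) @ \oo --> l - u 0%N.
Proof.
move=> h.
have -> : series (fun t => u t.+1) = fun N => series u N.+1 - u 0%N.
  apply: funext => N; rewrite !seriesE big_nat_recl //= addrC addKr.
  by apply: eq_bigr.
apply: cvgB; last exact: cvg_cst.
by rewrite (cvg_shiftS (series u)).
Qed.

End SeriesFacts.

End M1.
Import M1.

Module M2.

Local Open Scope classical_set_scope.

Section MDPFacts.
Variables (R : realType) (S A : finType) (P : S -> A -> {ffun S -> R}) (Rw : S -> A -> R).
Variables (gamma Rmax : R).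
Hypothesis HP : is_kernel P.
Hypothesis HR : forall s a, 0 <= Rw s a <= Rmax.
Hypothesis Hg : 0 <= gamma < 1.

Definition isd (nu : S * A -> R) := (forall x, 0 <= nu x) /\ \sum_x nu x = 1.

Definition stepd (pi : policy R S A) (nu : S * A -> R) : S * A -> R :=
  fun y => \sum_x nu x * P x.1 x.2 y.1 * pi y.1 y.2.

Lemma sum_pair (F : S * A -> R) : \sum_y F y = \sum_s \sum_a F (s, a).
Proof. by rewrite pair_big; apply: eq_bigr => -[]. Qed.

Lemma stepd_sum pi nu : is_policy pi -> \sum_y stepd pi nu y = \sum_x nu x.
Proof.
move=> Hpi; rewrite /stepd exchange_big; apply: eq_bigr => x _.
under eq_bigr do rewrite -mulrA.
rewrite -mulr_sumr sum_pair.
have -> : \sum_s \sum_a P x.1 x.2 (s, a).1 * pi (s, a).1 (s, a).2 = 1.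
  case: (HP x.1 x.2) => _ <-; apply: eq_bigr => s _ /=.
  by rewrite -mulr_sumr (proj2 (Hpi s)) mulr1.
by rewrite mulr1.
Qed.

Lemma stepd_ge0 pi nu : is_policy pi -> (forall x, 0 <= nu x) -> forall y, 0 <= stepd pi nu y.
Proof.
move=> Hpi h y; apply: sumr_ge0 => x _; apply: mulr_ge0; last by case: (Hpi y.1) => ->.
apply: mulr_ge0 => //; by case: (HP x.1 x.2) => ->.
Qed.

Lemma sa_dist_isd pi mu : is_policy pi -> isd mu -> forall t, isd (sa_dist P pi mu t).
Proof.
move=> Hpi [h0 h1]; elim=> [|t [IH0 IH1]] //=; split.
  by move=> y; exact: (stepd_ge0 Hpi IH0 y).
by rewrite (stepd_sum _ Hpi) IH1.
Qed.

Lemma isd_le1 nu : isd nu -> forall x, nu x <= 1.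
Proof.
case=> h0 h1 x; rewrite -h1 (bigD1 x) //= lerDl; exact: sumr_ge0.
Qed.

Lemma point_isd s a : isd (point_dist R s a).
Proof.
split=> [x|]; first by rewrite /point_dist; case: ifP.
rewrite (bigD1 (s, a)) //= /point_dist eqxx big1 ?addr0 // => x /negbTE -> //.
Qed.

Lemma init_isd d0 pi : is_dist_S d0 -> is_policy pi -> isd (init_dist d0 pi).
Proof.
move=> [d1 d2] Hpi; split=> [x|].
  rewrite /init_dist; apply: mulr_ge0 => //; by case: (Hpi x.1) => ->.
rewrite sum_pair -d2; apply: eq_bigr => s _ /=.
by rewrite /init_dist /= -mulr_sumr (proj2 (Hpi s)) mulr1.
Qed.

Lemma sa_dist_lin pi mu t y :
  sa_dist P pi mu t y = \sum_z mu z * sa_dist P pi (point_dist R z.1 z.2) t y.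
Proof.
elim: t y => [|t IH] y /=.
  rewrite (bigD1 y) //= /point_dist -surjective_pairing eqxx mulr1 big1 ?addr0 //.
  move=> z zy; case: ifP; last by rewrite mulr0.
  by move/eqP=> e; move: zy; rewrite e -surjective_pairing eqxx.
under eq_bigr do rewrite IH !mulr_suml.
rewrite exchange_big; apply: eq_bigr => z _; rewrite mulr_sumr.
by apply: eq_bigr => x _; rewrite !mulrA.
Qed.

Lemma sa_dist_shift pi mu t y :
  sa_dist P pi mu t.+1 y = sa_dist P pi (stepd pi mu) t y.
Proof.
elim: t y => [|t IH] y //.
change (\sum_x sa_dist P pi mu t.+1 x * P x.1 x.2 y.1 * pi y.1 y.2 =
  \sum_x sa_dist P pi (stepd pi mu) t x * P x.1 x.2 y.1 * pi y.1 y.2).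
by apply: eq_bigr => x _; rewrite IH.
Qed.

Lemma exp_reward_lin pi mu t :
  exp_reward P Rw pi mu t = \sum_z mu z * exp_reward P Rw pi (point_dist R z.1 z.2) t.
Proof.
rewrite /exp_reward; under eq_bigr do rewrite sa_dist_lin mulr_suml.
rewrite exchange_big; apply: eq_bigr => z _; rewrite mulr_sumr.
by apply: eq_bigr => x _; rewrite mulrA.
Qed.

Lemma point_sum s a (F : S * A -> R) : \sum_x point_dist R s a x * F x = F (s, a).
Proof.
rewrite (bigD1 (s, a)) //= {1}/point_dist eqxx mul1r big1 ?addr0 //.
by move=> x /negbTE; rewrite /point_dist => ->; rewrite mul0r.
Qed.

Lemma stepd_point pi z y : stepd pi (point_dist R z.1 z.2) y = P z.1 z.2 y.1 * pi y.1 y.2.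
Proof.
rewrite /stepd; under eq_bigr do rewrite -mulrA.
by rewrite point_sum.
Qed.

Lemma exp_reward_S pi z t :
  exp_reward P Rw pi (point_dist R z.1 z.2) t.+1 =
  \sum_y P z.1 z.2 y.1 * pi y.1 y.2 * exp_reward P Rw pi (point_dist R y.1 y.2) t.
Proof.
transitivity (exp_reward P Rw pi (stepd pi (point_dist R z.1 z.2)) t).
  by rewrite /exp_reward; apply: eq_bigr => x _; rewrite sa_dist_shift.
rewrite exp_reward_lin; apply: eq_bigr => y _; by rewrite stepd_point.
Qed.

Lemma exp_reward_0 pi z : exp_reward P Rw pi (point_dist R z.1 z.2) 0 = Rw z.1 z.2.
Proof. by rewrite /exp_reward point_sum. Qed.

Lemma exp_reward_bnd pi mu t : is_policy pi -> isd mu ->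
  0 <= exp_reward P Rw pi mu t <= Rmax.
Proof.
move=> Hpi Hmu; case: (sa_dist_isd Hpi Hmu t) => h0 h1.
apply/andP; split.
  apply: sumr_ge0 => x _; apply: mulr_ge0 => //; by case/andP: (HR x.1 x.2).
apply: (le_trans (y := \sum_x sa_dist P pi mu t x * Rmax)).
  apply: ler_sum => x _; apply: ler_wpM2l => //; by case/andP: (HR x.1 x.2).
by rewrite -mulr_suml h1 mul1r.
Qed.

Lemma gterm_bnd pi mu : is_policy pi -> isd mu ->
  forall t, 0 <= gamma ^+ t * exp_reward P Rw pi mu t <= Rmax * gamma ^+ t.
Proof.
move=> Hpi Hmu t; case/andP: (exp_reward_bnd t Hpi Hmu) => a b.
case/andP: Hg => g0 _.
apply/andP; split; first by apply: mulr_ge0 => //; exact: exprn_ge0.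
rewrite mulrC; apply: ler_wpM2r => //; exact: exprn_ge0.
Qed.

Lemma Q_cvg pi z : is_policy pi ->
  series (fun t => gamma ^+ t * exp_reward P Rw pi (point_dist R z.1 z.2) t) @ \oo -->
  Qpi P Rw gamma pi z.
Proof.
move=> Hpi; rewrite /Qpi ffunE.
exact: (cvg_bounded_series Hg (gterm_bnd Hpi (point_isd _ _))).
Qed.

Lemma Q_bellman pi : is_policy pi -> bellman P Rw gamma pi (Qpi P Rw gamma pi) = Qpi P Rw gamma pi.
Proof.
move=> Hpi; apply/ffunP => z; rewrite ffunE.
have h := rs_shift (@Q_cvg pi z Hpi).
have e : (fun t => gamma ^+ t.+1 * exp_reward P Rw pi (point_dist R z.1 z.2) t.+1) =
   (fun t => \sum_y (gamma * (P z.1 z.2 y.1 * pi y.1 y.2)) *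
          (gamma ^+ t * exp_reward P Rw pi (point_dist R y.1 y.2) t)).
  apply: funext => t; rewrite exp_reward_S mulr_sumr; apply: eq_bigr => y _.
  by rewrite exprS; ring.
rewrite e in h.
have h2 := series_lin (c := fun y => gamma * (P z.1 z.2 y.1 * pi y.1 y.2)) (fun y => @Q_cvg pi y Hpi).
have ee := etrans (esym (rs_lim h)) (rs_lim h2).
move: ee; rewrite exp_reward_0 expr0 mul1r => ee.
have -> : Qpi P Rw gamma pi z = Rw z.1 z.2 + \sum_y gamma * (P z.1 z.2 y.1 * pi y.1 y.2) * Qpi P Rw gamma pi y.
  by rewrite -ee; ring.
congr (_ + _); rewrite mulr_sumr sum_pair; apply: eq_bigr => s _ /=.
rewrite /fpol mulr_sumr mulr_sumr; apply: eq_bigr => a _ /=; ring.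
Qed.

End MDPFacts.

End M2.
Import M2.

Module M3.

Local Open Scope classical_set_scope.

Section PerfDiff.
Variables (R : realType) (S A : finType) (P : S -> A -> {ffun S -> R}) (Rw : S -> A -> R).
Variables (gamma Rmax : R) (d0 : {ffun S -> R}) (pi : policy R S A).
Hypothesis HP : is_kernel P.
Hypothesis HR : forall s a, 0 <= Rw s a <= Rmax.
Hypothesis Hg : 0 <= gamma < 1.
Hypothesis Hd0 : is_dist_S d0.
Hypothesis Hpi : is_policy pi.

Let nu t := sa_dist P pi (init_dist d0 pi) t.
Let Hinit := init_isd Hd0 Hpi.

Lemma J_eq_JQ : Jpi P Rw gamma d0 pi = Jf d0 (Qpi P Rw gamma pi) pi.
Proof.
rewrite /Jpi.
have -> : (fun t => gamma ^+ t * exp_reward P Rw pi (init_dist d0 pi) t) =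
  (fun t => \sum_z init_dist d0 pi z * (gamma ^+ t * exp_reward P Rw pi (point_dist R z.1 z.2) t)).
  apply: funext => t; rewrite exp_reward_lin mulr_sumr; apply: eq_bigr => z _; ring.
rewrite (rs_lim (series_lin (c := init_dist d0 pi) (fun z => Q_cvg HP HR Hg (z:=z) Hpi))).
rewrite /Jf sum_pair; apply: eq_bigr => s _; rewrite /fpol mulr_sumr; apply: eq_bigr => a _.
by rewrite /init_dist /=; ring.
Qed.

Lemma nu_term_bnd x t : 0 <= gamma ^+ t * nu t x <= 1 * gamma ^+ t.
Proof.
case: (sa_dist_isd HP Hpi Hinit t) => h0 h1.
have := isd_le1 (sa_dist_isd HP Hpi Hinit t) x; rewrite -/(nu t) => le1.
case/andP: Hg => g0 _.
apply/andP; split; first by apply: mulr_ge0 => //; exact: exprn_ge0.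
rewrite mul1r; rewrite -{2}(mulr1 (gamma ^+ t)); apply: ler_wpM2l => //; exact: exprn_ge0.
Qed.

Lemma nu_cvg x : series (fun t => gamma ^+ t * nu t x) @ \oo --> rseries_sum (fun t => gamma ^+ t * nu t x).
Proof. exact: (cvg_bounded_series Hg (nu_term_bnd x)). Qed.

Lemma dpiE x : dpi P gamma d0 pi x = (1 - gamma) * rseries_sum (fun t => gamma ^+ t * nu t x).
Proof. by rewrite /dpi ffunE. Qed.

Lemma dpi_ge0 x : 0 <= dpi P gamma d0 pi x.
Proof.
rewrite dpiE; apply: mulr_ge0; first by case/andP: Hg => _ g1; rewrite subr_ge0 ltW.
apply: rs_ge0; first by move=> t; case/andP: (nu_term_bnd x t).
by apply/cvg_ex; eexists; exact: nu_cvg.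
Qed.

Lemma dpi_sum : \sum_x dpi P gamma d0 pi x = 1.
Proof.
under eq_bigr do rewrite dpiE.
rewrite -mulr_sumr.
have h := series_lin (c := fun=> 1) nu_cvg.
have e : (fun t => \sum_x (fun=> 1) x * (gamma ^+ t * nu t x)) = geometric 1 gamma.
  apply: funext => t; rewrite /geometric /=.
  under eq_bigr do rewrite mul1r. rewrite -mulr_sumr mul1r.
  by have := proj2 (sa_dist_isd HP Hpi Hinit t); rewrite /nu => ->; rewrite mulr1.
rewrite e in h.
have g1 : `|gamma| < 1 by case/andP: Hg => g0 g1; rewrite ger0_norm.
have h2 := cvg_geometric_series (a := 1) g1.
have := etrans (esym (rs_lim h)) (rs_lim h2).
under eq_bigr do rewrite mul1r.
move=> ->; rewrite mul1r mulfV // subr_eq0 eq_sym; case/andP: Hg => _ /lt_eqF ->; by [].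
Qed.

Lemma bellman_step (mu : S * A -> R) (f : qfun R S A) t :
  \sum_x sa_dist P pi mu t x * bellman P Rw gamma pi f x =
  exp_reward P Rw pi mu t + gamma * \sum_y sa_dist P pi mu t.+1 y * f y.
Proof.
rewrite /bellman; under eq_bigr do rewrite ffunE mulrDr.
rewrite big_split /=; congr (_ + _).
transitivity (\sum_x \sum_y gamma * (sa_dist P pi mu t x * P x.1 x.2 y.1 * pi y.1 y.2) * f y).
  apply: eq_bigr => x _; rewrite sum_pair /fpol !mulr_sumr; apply: eq_bigr => s _.
  rewrite !mulr_sumr; apply: eq_bigr => a _ /=; ring.
rewrite exchange_big mulr_sumr; apply: eq_bigr => y _.
change (sa_dist P pi mu t.+1 y) with (\sum_x sa_dist P pi mu t x * P x.1 x.2 y.1 * pi y.1 y.2).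
rewrite mulr_suml mulr_sumr; apply: eq_bigr => x _; ring.
Qed.

Lemma perf_diff (f : qfun R S A) V : (forall x, 0 <= f x <= V) ->
  \sum_x dpi P gamma d0 pi x * (bellman P Rw gamma pi f x - f x) =
  (1 - gamma) * (Jpi P Rw gamma d0 pi - Jf d0 f pi).
Proof.
move=> Hf.
under eq_bigr do rewrite dpiE -mulrA.
rewrite -mulr_sumr; congr (_ * _).
under eq_bigr do rewrite mulrC.
set h := fun x => bellman P Rw gamma pi f x - f x.
have h1 := series_lin (c := h) nu_cvg.
rewrite -(rs_lim h1).
apply: rs_lim.
set a := fun t => \sum_x nu t x * f x.
have eterm : forall t, \sum_x h x * (gamma ^+ t * nu t x) =
   gamma ^+ t * exp_reward P Rw pi (init_dist d0 pi) t +
   (gamma ^+ t.+1 * a t.+1 - gamma ^+ t * a t).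
  move=> t.
  have bs := bellman_step (init_dist d0 pi) f t.
  rewrite -/(nu t) -/(nu t.+1) in bs.
  have -> : \sum_x h x * (gamma ^+ t * nu t x) =
     gamma ^+ t * (\sum_x nu t x * bellman P Rw gamma pi f x - a t).
    rewrite /a -sumrB mulr_sumr; apply: eq_bigr => x _; rewrite /h; ring.
  rewrite bs /a exprS; ring.
have -> : series (fun t => \sum_x h x * (gamma ^+ t * nu t x)) =
  (fun N => series (fun t => gamma ^+ t * exp_reward P Rw pi (init_dist d0 pi) t) N +
            (gamma ^+ N * a N - a 0%N)).
  apply: funext => N; rewrite !seriesE.
  under eq_bigr do rewrite eterm.
  rewrite big_split /=; congr (_ + _).
  rewrite (telescope_sumr (fun t => gamma ^+ t * a t)) //.
  by rewrite expr0 mul1r.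
have hJ := cvg_bounded_series Hg (gterm_bnd HP HR Hg Hpi Hinit).
have hJ2 : Jpi P Rw gamma d0 pi - Jf d0 f pi =
   rseries_sum (fun t => gamma ^+ t * exp_reward P Rw pi (init_dist d0 pi) t) + (0 - a 0%N).
  rewrite sub0r; congr (_ - _).
  rewrite /Jf /a sum_pair; apply: eq_bigr => s _; rewrite /fpol mulr_sumr; apply: eq_bigr => b _.
  by rewrite /nu /= /init_dist /=; ring.
rewrite hJ2.
apply: cvgD => //.
apply: cvgB; last exact: cvg_cst.
have g1 : `|gamma| < 1 by case/andP: Hg => g0 g1; rewrite ger0_norm.
have hV : (fun N => V * gamma ^+ N) @ \oo --> V * 0 by apply: cvgMl_tmp; exact: cvg_expr.
rewrite mulr0 in hV.
apply: (squeeze_cvgr _ (cvg_cst 0) hV).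
apply: nearW => N.
case/andP: Hg => g0 _.
have gN : 0 <= gamma ^+ N := exprn_ge0 N g0.
case: (sa_dist_isd HP Hpi Hinit N) => n0 n1.
have a0 : 0 <= a N by apply: sumr_ge0 => x _; apply: mulr_ge0 => //; case/andP: (Hf x).
have aV : a N <= V.
  apply: (le_trans (y := \sum_x nu N x * V)).
    by apply: ler_sum => x _; apply: ler_wpM2l => //; case/andP: (Hf x).
  by rewrite -mulr_suml /nu n1 mul1r.
apply/andP; split; first exact: mulr_ge0.
by rewrite mulrC; apply: ler_wpM2r.
Qed.

End PerfDiff.

End M3.
Import M3.

Module M4.


Section CS.
Variable R : realType.

Lemma cauchy_schwarz (I : finType) (w a b : I -> R) : (forall i, 0 <= w i) ->
  (\sum_i w i * a i * b i) ^+ 2 <= (\sum_i w i * a i ^+ 2) * (\sum_i w i * b i ^+ 2).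
Proof.
move=> w0.
set A := \sum_i w i * a i ^+ 2; set B := \sum_i w i * a i * b i; set C := \sum_i w i * b i ^+ 2.
have C0 : 0 <= C by apply: sumr_ge0 => i _; apply: mulr_ge0 => //; exact: sqr_ge0.
have A0 : 0 <= A by apply: sumr_ge0 => i _; apply: mulr_ge0 => //; exact: sqr_ge0.
have key : forall t, 0 <= A - 2 * t * B + t ^+ 2 * C.
  move=> t.
  have -> : A - 2 * t * B + t ^+ 2 * C = \sum_i w i * (a i - t * b i) ^+ 2.
    rewrite /A /B /C !mulr_sumr -sumrB -big_split /=; apply: eq_bigr => i _; ring.
  by apply: sumr_ge0 => i _; apply: mulr_ge0 => //; exact: sqr_ge0.
have [Cz|Cp] := eqVneq C 0.
  have wb : forall i, w i * b i = 0.
    move=> i; have : w i * b i ^+ 2 = 0.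
      apply/eqP; rewrite eq_le; apply/andP; split; last by apply: mulr_ge0 => //; exact: sqr_ge0.
      rewrite -Cz /C (bigD1 i) //= lerDl; apply: sumr_ge0 => j _; apply: mulr_ge0 => //; exact: sqr_ge0.
    move/eqP; rewrite mulf_eq0 => /orP[/eqP->|]; first by rewrite mul0r.
    by rewrite sqrf_eq0 => /eqP->; rewrite mulr0.
  have -> : B = 0 by rewrite /B big1 // => i _; rewrite -mulrA (mulrC (a i)) mulrA wb mul0r.
  by rewrite Cz expr0n /= mulr0.
have Cpos : 0 < C by rewrite lt_def Cp C0.
have := key (B / C).
have -> : A - 2 * (B / C) * B + (B / C) ^+ 2 * C = (A * C - B ^+ 2) / C.
  by field; rewrite Cp.
rewrite pmulr_lge0 ?invr_gt0 // subr_ge0 => h.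
by [].
Qed.

Lemma sq_le_sqrt (x y : R) : 0 <= y -> x ^+ 2 <= y -> x <= Num.sqrt y.
Proof.
move=> y0 h; apply: (le_trans (ler_norm x)).
by rewrite -sqrtr_sqr ler_sqrt.
Qed.

End CS.

Section ConcBound.
Variables (R : realType) (S A : finType) (P : S -> A -> {ffun S -> R}) (gamma : R).
Variables (d0 : {ffun S -> R}) (dD : {ffun S * A -> R}) (pi : policy R S A).

Lemma conc_bound (h : S * A -> R) :
  is_dist_SA dD -> conc_finite P gamma d0 dD pi ->
  (forall x, 0 <= dpi P gamma d0 pi x) -> \sum_x dpi P gamma d0 pi x = 1 ->
  \sum_x dpi P gamma d0 pi x * h x <=
  Num.sqrt (conc P gamma d0 dD pi * \sum_x dD x * h x ^+ 2).
Proof.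
move=> [dD0 _] cf dp0 dp1.
set d := dpi P gamma d0 pi.
set C := conc P gamma d0 dD pi.
have C0 : 0 <= C.
  rewrite /C /conc; apply: (big_ind (fun x => 0 <= x)) => //.
    by move=> x y hx hy; rewrite le_max hx.
  by move=> x _; apply: divr_ge0.
have Cx : forall x, d x / dD x <= C.
  move=> x; rewrite /C /conc; exact: (le_bigmax _ (fun x => d x / dD x) x).
have ddD : forall x, dD x * (d x / dD x) = d x.
  move=> x; have [z|nz] := eqVneq (dD x) 0.
    by rewrite z mul0r; rewrite /d (cf x z).
  by rewrite mulrC divfK.
have e1 : \sum_x d x * h x <= \sum_x dD x * (d x / dD x) * `|h x|.
  apply: ler_sum => x _; rewrite ddD; apply: ler_wpM2l => //; exact: ler_norm.
have e2 := cauchy_schwarz (fun x => d x / dD x) (fun x => `|h x|) dD0.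
have e3 : \sum_x dD x * (d x / dD x) ^+ 2 <= C.
  apply: (le_trans (y := \sum_x d x * C)); last by rewrite -mulr_suml dp1 mul1r.
  apply: ler_sum => x _; rewrite expr2 mulrA ddD; apply: ler_wpM2l => //.
have mu0 : 0 <= \sum_x dD x * h x ^+ 2.
  by apply: sumr_ge0 => x _; apply: mulr_ge0 => //; exact: sqr_ge0.
apply: (le_trans e1); apply: sq_le_sqrt; first exact: mulr_ge0.
apply: (le_trans e2).
have -> : \sum_x dD x * `|h x| ^+ 2 = \sum_x dD x * h x ^+ 2.
  by apply: eq_bigr => x _; rewrite real_normK ?num_real.
apply: ler_wpM2r => //.
Qed.
End ConcBound.

End M4.
Import M4.

Module M5.


Section Prob.
Variables (R : realType) (T : finType) (w : T -> R) (n : nat).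
Hypothesis w0 : forall x, 0 <= w x.
Hypothesis w1 : \sum_x w x = 1.

Definition probD (E : {ffun 'I_n -> T} -> bool) : R :=
  \sum_(d | E d) \prod_i w (d i).

Lemma prod_distr (F : T -> R) :
  \sum_(d : {ffun 'I_n -> T}) \prod_i F (d i) = (\sum_x F x) ^+ n.
Proof.
rewrite -(bigA_distr_bigA (fun (i : 'I_n) (x : T) => F x)) /=.
by rewrite prodr_const card_ord.
Qed.

Lemma probD_total : \sum_(d : {ffun 'I_n -> T}) \prod_i w (d i) = 1.
Proof. by rewrite prod_distr w1 expr1n. Qed.

Lemma pw_ge0 (d : {ffun 'I_n -> T}) : 0 <= \prod_i w (d i).
Proof. by apply: prodr_ge0 => i _. Qed.

Lemma probD_ge0 E : 0 <= probD E.
Proof. by apply: sumr_ge0 => d _; exact: pw_ge0. Qed.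

Lemma probD_mono (E E' : {ffun 'I_n -> T} -> bool) :
  (forall d, E d -> E' d) -> probD E <= probD E'.
Proof.
move=> h; rewrite /probD (big_mkcond E) (big_mkcond E') /=.
apply: ler_sum => d _; case: (boolP (E d)) => Ed; first by rewrite (h d Ed).
by case: (E' d) => //; exact: pw_ge0.
Qed.

Lemma probD_compl E : probD E + probD (fun d => ~~ E d) = 1.
Proof. by rewrite /probD [RHS](esym probD_total) [RHS](bigID E). Qed.

Lemma probD_or E1 E2 : probD (fun d => E1 d || E2 d) <= probD E1 + probD E2.
Proof.
rewrite /probD (big_mkcond (fun d => E1 d || E2 d)) (big_mkcond E1) (big_mkcond E2) -big_split /=.
apply: ler_sum => d _; have := pw_ge0 d.
by case: (E1 d); case: (E2 d) => /= h; rewrite ?addr0 ?add0r ?lerDl.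
Qed.

Lemma probD_false : probD (fun=> false) = 0.
Proof. by rewrite /probD big_pred0. Qed.

Lemma probD_has (I : Type) (s : seq I) (E : I -> {ffun 'I_n -> T} -> bool) :
  probD (fun d => has (fun i => E i d) s) <= \sum_(i <- s) probD (E i).
Proof.
elim: s => [|a s IH]; first by rewrite big_nil probD_false.
rewrite big_cons; apply: (le_trans (probD_or _ _)); exact: lerD.
Qed.

Lemma mgf_eq (h : T -> R) lam :
  \sum_(d : {ffun 'I_n -> T}) \prod_i w (d i) * expR (lam * \sum_i h (d i)) =
  (\sum_x w x * expR (lam * h x)) ^+ n.
Proof.
rewrite -prod_distr; apply: eq_bigr => d _.
by rewrite mulr_sumr expR_sum -big_split.
Qed.

Lemma markov (h : T -> R) lam t : 0 <= lam ->
  probD (fun d => t <= \sum_i h (d i)) <=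
  expR (- (lam * t)) * (\sum_x w x * expR (lam * h x)) ^+ n.
Proof.
move=> l0; rewrite -mgf_eq mulr_sumr /probD big_mkcond /=.
apply: ler_sum => d _; have p0 := pw_ge0 d.
rewrite mulrCA -expRD.
case: ifP => ht; last by apply: mulr_ge0 => //; exact: expR_ge0.
rewrite -{1}(mulr1 (\prod_i w (d i))); apply: ler_wpM2l => //.
apply: (le_trans _ (expR_ge1Dx _)); rewrite lerDl.
rewrite addrC subr_ge0; apply: ler_wpM2l => //.
Qed.

Lemma expR_quad (y : R) : y <= 1/2 -> expR y <= 1 + y + 2 * y ^+ 2.
Proof.
move=> hy.
have e1 := expR_ge1Dx (- y).
have E0 : 0 < expR y := expR_gt0 y.
have EF : expR y * expR (- y) = 1 := expRxMexpNx_1 y.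
set q := 1 + y + 2 * y ^+ 2.
have q0 : 0 <= q by rewrite /q; nra.
have k1 : 1 <= (1 - y) * q by rewrite /q; nra.
have k2 : expR y * (1 - y) <= 1.
  rewrite -EF; apply: ler_wpM2l; [exact: ltW | lra].
have : expR y * ((1 - y) * q) <= q.
  by rewrite mulrA -{2}(mul1r q); apply: ler_wpM2r.
move=> h; apply: (le_trans _ h); rewrite -{1}(mulr1 (expR y)); apply: ler_wpM2l => //; exact: ltW.
Qed.

Lemma mgf_bound (h : T -> R) lam : (forall x, lam * h x <= 1/2) ->
  \sum_x w x * expR (lam * h x) <=
  1 + lam * \sum_x w x * h x + 2 * lam ^+ 2 * \sum_x w x * h x ^+ 2.
Proof.
move=> hl.
apply: (le_trans (y := \sum_x w x * (1 + lam * h x + 2 * (lam * h x) ^+ 2))).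
  by apply: ler_sum => x _; apply: ler_wpM2l => //; exact: expR_quad.
have -> : \sum_x w x * (1 + lam * h x + 2 * (lam * h x) ^+ 2) =
   \sum_x w x + lam * \sum_x w x * h x + 2 * lam ^+ 2 * \sum_x w x * h x ^+ 2.
  rewrite !mulr_sumr -!big_split /=; apply: eq_bigr => x _; ring.
by rewrite w1.
Qed.

Lemma mgf_ge0 (h : T -> R) lam : 0 <= \sum_x w x * expR (lam * h x).
Proof. by apply: sumr_ge0 => x _; apply: mulr_ge0 => //; exact: expR_ge0. Qed.

Lemma tail1 (h : T -> R) B mu t : 0 < B -> (forall x, `|h x| <= B) ->
  \sum_x w x * h x = - mu -> \sum_x w x * h x ^+ 2 <= 4 * B * mu ->
  probD (fun d => t <= \sum_i h (d i)) <= expR (- (t / (8 * B))).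
Proof.
move=> B0 hB hm hv.
set lam := (8 * B)^-1.
have l0 : 0 < lam by rewrite /lam invr_gt0; lra.
have hl : forall x, lam * h x <= 1/2.
  move=> x; have := hB x; rewrite ler_norml => /andP[_ hx].
  apply: (le_trans (y := lam * B)); first by apply: ler_wpM2l => //; exact: ltW.
  have -> : lam * B = 1 / 8 by rewrite /lam; field; exact: lt0r_neq0.
  lra.
have hmgf : \sum_x w x * expR (lam * h x) <= 1.
  apply: (le_trans (mgf_bound hl)); rewrite hm.
  have : 2 * lam ^+ 2 * \sum_x w x * h x ^+ 2 <= 2 * lam ^+ 2 * (4 * B * mu).
    by apply: ler_wpM2l => //; apply: mulr_ge0 => //; exact: sqr_ge0.
  suff -> : 2 * lam ^+ 2 * (4 * B * mu) = lam * mu by lra.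
  rewrite /lam; field; lra.
apply: (le_trans (markov _ _ (ltW l0))).
have -> : lam * t = t / (8 * B) by rewrite /lam mulrC.
rewrite -[X in _ <= X]mulr1; apply: ler_wpM2l; first exact: expR_ge0.
by apply: exprn_ile1 => //; exact: mgf_ge0.
Qed.

Lemma tail2 (h : T -> R) B mu t : 0 < B -> (forall x, `|h x| <= B) ->
  \sum_x w x * h x = - mu -> \sum_x w x * h x ^+ 2 <= 4 * B * mu ->
  probD (fun d => t <= \sum_i h (d i)) <=
  expR (- (t / (16 * B))) * expR (n%:R * (- (mu / (32 * B)))).
Proof.
move=> B0 hB hm hv.
set lam := (16 * B)^-1.
have l0 : 0 < lam by rewrite /lam invr_gt0; lra.
have hl : forall x, lam * h x <= 1/2.
  move=> x; have := hB x; rewrite ler_norml => /andP[_ hx].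
  apply: (le_trans (y := lam * B)); first by apply: ler_wpM2l => //; exact: ltW.
  have -> : lam * B = 1 / 16 by rewrite /lam; field; exact: lt0r_neq0.
  lra.
have hmgf : \sum_x w x * expR (lam * h x) <= expR (- (mu / (32 * B))).
  apply: (le_trans (mgf_bound hl)); rewrite hm.
  have : 2 * lam ^+ 2 * \sum_x w x * h x ^+ 2 <= 2 * lam ^+ 2 * (4 * B * mu).
    by apply: ler_wpM2l => //; apply: mulr_ge0 => //; exact: sqr_ge0.
  have -> : 2 * lam ^+ 2 * (4 * B * mu) = lam * mu - mu / (32 * B).
    rewrite /lam; field; lra.
  move=> hh; apply: (le_trans _ (expR_ge1Dx _)); lra.
apply: (le_trans (markov _ _ (ltW l0))).
have -> : lam * t = t / (16 * B) by rewrite /lam mulrC.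
apply: ler_wpM2l; first exact: expR_ge0.
rewrite expRM_natl; apply: lerXn2r; rewrite ?nnegrE //; first exact: mgf_ge0.
Qed.

End Prob.

End M5.
Import M5.

Module M6.


Section SampleFacts.
Variables (R : realType) (S A : finType) (P : S -> A -> {ffun S -> R}) (Rw : S -> A -> R).
Variables (gamma Rmax V : R) (dD : {ffun S * A -> R}) (pi : policy R S A).
Hypothesis HP : is_kernel P.
Hypothesis HR : forall s a, 0 <= Rw s a <= Rmax.
Hypothesis Hg : 0 <= gamma < 1.
Hypothesis HV : Rmax = (1 - gamma) * V.
Hypothesis HdD : is_dist_SA dD.
Hypothesis Hpi : is_policy pi.

Definition wt (x : sample S A) : R := dD (x.1.1, x.1.2) * P x.1.1 x.1.2 x.2.

Definition Zl (f g : qfun R S A) (x : sample S A) : R :=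
  (f (x.1.1, x.1.2) - Rw x.1.1 x.1.2 - gamma * fpol f x.2 pi) ^+ 2
  - (g (x.1.1, x.1.2) - Rw x.1.1 x.1.2 - gamma * fpol f x.2 pi) ^+ 2.

Lemma sum_sample (F : sample S A -> R) : \sum_x F x = \sum_z \sum_s F (z, s).
Proof. by rewrite pair_big; apply: eq_bigr => -[]. Qed.

Lemma wt_ge0 x : 0 <= wt x.
Proof. apply: mulr_ge0; first by case: HdD. by case: (HP x.1.1 x.1.2) => ->. Qed.

Lemma sumP_lin z (al be : R) (F : S -> R) :
  \sum_s P z.1 z.2 s * (al + be * F s) = al + be * \sum_s P z.1 z.2 s * F s.
Proof.
under eq_bigr do rewrite mulrDr.
rewrite big_split /= -mulr_suml (proj2 (HP z.1 z.2)) mul1r mulr_sumr; congr (_ + _).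
by apply: eq_bigr => s _; ring.
Qed.

Lemma wt_sum (G : S * A -> R) : \sum_x wt x * G x.1 = \sum_z dD z * G z.
Proof.
rewrite sum_sample; apply: eq_bigr => z _ /=.
rewrite /wt /= -surjective_pairing.
under eq_bigr do rewrite mulrAC.
by rewrite -mulr_sumr (proj2 (HP z.1 z.2)) mulr1.
Qed.

Lemma Zl_mean f g :
  \sum_x wt x * Zl f g x =
  \sum_z dD z * ((f z - g z) * (f z + g z - 2 * bellman P Rw gamma pi f z)).
Proof.
rewrite sum_sample; apply: eq_bigr => z _ /=.
rewrite /wt /Zl /= -surjective_pairing.
under eq_bigr do rewrite -mulrA.
rewrite -mulr_sumr; congr (_ * _).
set al := (f z - g z) * (f z + g z) - 2 * (f z - g z) * Rw z.1 z.2.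
set be := - 2 * (f z - g z) * gamma.
transitivity (\sum_s P z.1 z.2 s * (al + be * fpol f s pi)).
  by apply: eq_bigr => s _; rewrite /al /be; congr (_ * _); ring.
rewrite sumP_lin /al /be /bellman ffunE; ring.
Qed.

Lemma fpol_bnd (f : qfun R S A) s : (forall x, 0 <= f x <= V) -> 0 <= fpol f s pi <= V.
Proof.
move=> hf; case: (Hpi s) => p0 p1; apply/andP; split.
  by apply: sumr_ge0 => a _; apply: mulr_ge0 => //; case/andP: (hf (s, a)).
apply: (le_trans (y := \sum_a pi s a * V)).
  by apply: ler_sum => a _; apply: ler_wpM2l => //; case/andP: (hf (s, a)).
by rewrite -mulr_suml p1 mul1r.
Qed.

Lemma target_bnd (f : qfun R S A) x : (forall x, 0 <= f x <= V) ->
  0 <= Rw x.1.1 x.1.2 + gamma * fpol f x.2 pi <= V.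
Proof.
move=> hf; case/andP: (fpol_bnd x.2 hf) => a b; case/andP: (HR x.1.1 x.1.2) => c d.
case/andP: Hg => g0 g1.
apply/andP; split; first by apply: addr_ge0 => //; exact: mulr_ge0.
have : gamma * fpol f x.2 pi <= gamma * V by exact: ler_wpM2l.
move: d; rewrite HV; lra.
Qed.

Lemma quad_abs (a b y : R) : 0 <= a <= V -> 0 <= b <= V -> 0 <= y <= V ->
  `|(a - y) ^+ 2 - (b - y) ^+ 2| <= V ^+ 2.
Proof.
move=> /andP[a0 aV] /andP[b0 bV] /andP[y0 yV].
have h1 : 0 <= (V - (a - y)) * (V + (a - y)) by apply: mulr_ge0; lra.
have h2 : 0 <= (V - (b - y)) * (V + (b - y)) by apply: mulr_ge0; lra.
have h3 := sqr_ge0 (a - y); have h4 := sqr_ge0 (b - y).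
rewrite ler_norml; apply/andP; split; nra.
Qed.

Lemma quad_sq (a b y : R) : 0 <= a <= V -> 0 <= b <= V -> 0 <= y <= V ->
  ((a - y) ^+ 2 - (b - y) ^+ 2) ^+ 2 <= 4 * V ^+ 2 * (a - b) ^+ 2.
Proof.
move=> /andP[a0 aV] /andP[b0 bV] /andP[y0 yV].
have -> : ((a - y) ^+ 2 - (b - y) ^+ 2) ^+ 2 = (a - b) ^+ 2 * (a + b - 2 * y) ^+ 2 by ring.
have h : (a + b - 2 * y) ^+ 2 <= 4 * V ^+ 2.
  have h1 : 0 <= (2 * V - (a + b - 2 * y)) * (2 * V + (a + b - 2 * y)) by apply: mulr_ge0; lra.
  nra.
rewrite mulrC; apply: ler_wpM2r => //; exact: sqr_ge0.
Qed.

Lemma Zl_form (f g : qfun R S A) x :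
  Zl f g x = (f (x.1.1, x.1.2) - (Rw x.1.1 x.1.2 + gamma * fpol f x.2 pi)) ^+ 2
           - (g (x.1.1, x.1.2) - (Rw x.1.1 x.1.2 + gamma * fpol f x.2 pi)) ^+ 2.
Proof. by rewrite /Zl !opprD !addrA. Qed.

Lemma Zl_abs (f g : qfun R S A) x : (forall x, 0 <= f x <= V) -> (forall x, 0 <= g x <= V) ->
  `|Zl f g x| <= V ^+ 2.
Proof. by move=> hf hg; rewrite Zl_form; apply: quad_abs => //; exact: target_bnd. Qed.

Lemma Zl_var (f g : qfun R S A) : (forall x, 0 <= f x <= V) -> (forall x, 0 <= g x <= V) ->
  \sum_x wt x * Zl f g x ^+ 2 <= 4 * V ^+ 2 * \sum_z dD z * (f z - g z) ^+ 2.
Proof.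
move=> hf hg.
apply: (le_trans (y := \sum_x wt x * (4 * V ^+ 2 * (f x.1 - g x.1) ^+ 2))).
  apply: ler_sum => x _; apply: ler_wpM2l; first exact: wt_ge0.
  rewrite Zl_form [x.1]surjective_pairing; apply: quad_sq => //; exact: target_bnd.
rewrite (wt_sum (fun z => 4 * V ^+ 2 * (f z - g z) ^+ 2)) mulr_sumr; rewrite le_eqVlt; apply/orP; left; apply/eqP.
by apply: eq_bigr => z _; ring.
Qed.

End SampleFacts.

End M6.
Import M6.

Module M7.


Section Aux.
Variable R : realType.
Local Open Scope ereal_scope.

Lemma bigmine_le (I : eqType) (s : seq I) (Pr : pred I) (F : I -> \bar R) x :
  x \in s -> Pr x -> \big[mine/+oo]_(f <- s | Pr f) F f <= F x.
Proof.
elim: s => // a s IH; rewrite in_cons big_cons => /orP[/eqP->|xs] px.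
  by rewrite px ge_min lexx.
case: ifP => _; last exact: IH.
by rewrite ge_min (IH xs px) orbT.
Qed.

Lemma bigmine_att (I : eqType) (s : seq I) (Pr : pred I) (F : I -> R) :
  has Pr s -> exists2 y, (y \in s) && Pr y &
    \big[mine/+oo]_(f <- s | Pr f) (F f)%:E = (F y)%:E.
Proof.
elim: s => // a s IH /=; rewrite big_cons.
case Pra: (Pr a) => /= hs.
  case: (boolP (has Pr s)) => hs'.
    case: (IH hs') => y /andP[ys py] ->.
    case: leP => h.
      by exists a; rewrite ?inE ?eqxx ?Pra.
    by exists y => //; rewrite inE ys orbT py.
  rewrite big_hasC // min_l ?leey //.
  by exists a; rewrite ?inE ?eqxx ?Pra.
case: (IH hs) => y /andP[ys py] ->.
by exists y => //; rewrite inE ys orbT py.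
Qed.

End Aux.

Lemma sum_const_seq (R : realType) (I : Type) (s : seq I) (c : R) :
  \sum_(i <- s) c = (size s)%:R * c.
Proof.
elim: s => [|a s IH]; first by rewrite big_nil mul0r.
by rewrite big_cons IH /= -add1n natrD mulrDl mul1r.
Qed.

Lemma seq1_eq (T : eqType) (s : seq T) x y : (size s <= 1)%N -> x \in s -> y \in s -> x = y.
Proof. by case: s => [|a [|b s]] //= _; rewrite !inE => /eqP-> /eqP->. Qed.

End M7.
Import M7.

Module M8.


Section Events.
Variables (R : realType) (S A : finType) (P : S -> A -> {ffun S -> R}) (Rw : S -> A -> R).
Variables (gamma Rmax V lg eps0 : R) (dD : {ffun S * A -> R}) (n : nat).
Hypothesis HP : is_kernel P.
Hypothesis HR : forall s a, 0 <= Rw s a <= Rmax.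
Hypothesis Hg : 0 <= gamma < 1.
Hypothesis HV : Rmax = (1 - gamma) * V.
Hypothesis HdD : is_dist_SA dD.
Hypothesis Hn : (0 < n)%N.
Hypothesis Hlg : 0 <= lg.
Hypothesis Heps : eps0 = 32 * V ^+ 2 * lg / n%:R.

Let w := wt P dD.
Lemma w0 : forall x, 0 <= w x.
Proof. exact: (wt_ge0 HP HdD). Qed.
Lemma w1 : \sum_x w x = 1.
Proof.
have := wt_sum dD HP (fun=> 1); rewrite /w.
under eq_bigr do rewrite mulr1. move=> ->.
under eq_bigr do rewrite mulr1. by case: HdD.
Qed.

Definition mu (f g : qfun R S A) := \sum_z dD z * (f z - g z) ^+ 2.

Lemma neps : n%:R * eps0 = 32 * V ^+ 2 * lg.
Proof. rewrite Heps; field; by rewrite pnatr_eq0 -lt0n. Qed.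

Lemma Zl_zero pi (f g : qfun R S A) x : is_policy pi -> V ^+ 2 = 0 ->
  (forall x, 0 <= f x <= V) -> (forall x, 0 <= g x <= V) -> Zl Rw gamma pi f g x = 0.
Proof.
move=> Hpi V0 hf hg; have := Zl_abs HR Hg HV Hpi x hf hg; rewrite V0.
by rewrite normr_le0 => /eqP.
Qed.

Lemma prob_B1 pi (g : qfun R S A) : is_policy pi ->
  (forall x, 0 <= Qpi P Rw gamma pi x <= V) -> (forall x, 0 <= g x <= V) ->
  probD w (fun d : {ffun 'I_n -> sample S A} =>
     n%:R * eps0 < \sum_i Zl Rw gamma pi (Qpi P Rw gamma pi) g (d i))
  <= expR (- (lg + lg)).
Proof.
move=> Hpi hQ hg.
have [V0|Vp] := eqVneq (V ^+ 2) 0.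
  apply: (le_trans (y := probD w (fun=> false))); last by rewrite probD_false; exact: expR_ge0.
  apply: probD_mono; first exact: w0.
  move=> d; rewrite neps V0 mulr0 mul0r big1 ?ltxx // => i _; exact: Zl_zero.
have B0 : 0 < V ^+ 2 by rewrite lt_def Vp sqr_ge0.
apply: (le_trans (probD_mono w0 (E' := fun d => n%:R * eps0 <= \sum_i Zl Rw gamma pi (Qpi P Rw gamma pi) g (d i)) _)).
  by move=> d /ltW.
have hm : \sum_x w x * Zl Rw gamma pi (Qpi P Rw gamma pi) g x = - mu (Qpi P Rw gamma pi) g.
  rewrite /w Zl_mean // (Q_bellman HP HR Hg Hpi) /mu -sumrN; apply: eq_bigr => z _; ring.
have hv := Zl_var HP HR Hg HV HdD Hpi hQ hg.
apply: (le_trans (tail1 n w0 w1 _ B0 (fun x => Zl_abs HR Hg HV Hpi x hQ hg) hm _)).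
  by rewrite -/w in hv; rewrite /mu.
rewrite ler_expR neps lerN2.
have -> : 32 * V ^+ 2 * lg / (8 * V ^+ 2) = 4 * lg.
  by field; apply: contra Vp => /eqP->; rewrite expr2 mul0r.
have -> : 4 * lg = (lg + lg) + (lg + lg) by ring.
by rewrite lerDl addr_ge0.
Qed.

Lemma prob_B2 pi (f : qfun R S A) : is_policy pi ->
  (forall x, 0 <= f x <= V) -> (forall x, 0 <= bellman P Rw gamma pi f x <= V) ->
  probD w (fun d : {ffun 'I_n -> sample S A} =>
     (4 * eps0 < mu f (bellman P Rw gamma pi f)) &&
     (\sum_i Zl Rw gamma pi f (bellman P Rw gamma pi f) (d i) <= n%:R * eps0))
  <= expR (- (lg + lg)).
Proof.
move=> Hpi hf hb.
set g := bellman P Rw gamma pi f.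
case: (boolP (4 * eps0 < mu f g)) => hmu; last first.
  apply: (le_trans (y := probD w (fun=> false))); last by rewrite probD_false; exact: expR_ge0.
  by apply: probD_mono; first exact: w0.
have [V0|Vp] := eqVneq (V ^+ 2) 0.
  exfalso; move: hmu.
  have Vz : V = 0 by apply/eqP; rewrite -sqrf_eq0 V0.
  have fz : forall z, f z = 0 by move=> z; apply/eqP; rewrite eq_le; case/andP: (hf z) => -> ; rewrite -Vz andbT.
  have gz : forall z, g z = 0 by move=> z; apply/eqP; rewrite eq_le; case/andP: (hb z) => -> ; rewrite -Vz andbT.
  rewrite Heps V0 mulr0 !mul0r mulr0 /mu big1 ?ltxx // => z _.
  by rewrite fz gz subr0 expr2 !mulr0.
have B0 : 0 < V ^+ 2 by rewrite lt_def Vp sqr_ge0.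
have Vn : V != 0 by apply: contra Vp => /eqP->; rewrite expr2 mul0r.
apply: (le_trans (probD_mono w0 (E' := fun d => - (n%:R * eps0) <= \sum_i (fun x => - Zl Rw gamma pi f g x) (d i)) _)).
  move=> d /andP[_ h]; rewrite sumrN lerN2; exact: h.
have hm : \sum_x w x * (- Zl Rw gamma pi f g x) = - mu f g.
  under eq_bigr do rewrite mulrN.
  rewrite sumrN; congr (- _); rewrite /w Zl_mean // /mu; apply: eq_bigr => z _; rewrite /g; ring.
have hv := Zl_var HP HR Hg HV HdD Hpi hf hb.
have habs : forall x, `|- Zl Rw gamma pi f g x| <= V ^+ 2.
  by move=> x; rewrite normrN; exact: (Zl_abs HR Hg HV Hpi x hf hb).
apply: (le_trans (tail2 n w0 w1 _ B0 habs hm _)).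
  rewrite /mu; under eq_bigr do rewrite sqrrN; exact: hv.
rewrite -expRD ler_expR.
have e1 : - (- (n%:R * eps0) / (16 * V ^+ 2)) = lg + lg by rewrite neps; field.
have hmn : 4 * (n%:R * eps0) <= n%:R * mu f g.
  rewrite mulrCA; apply: ler_wpM2l; first exact: ler0n.
  exact: ltW.
have e2 : n%:R * (- (mu f g / (32 * V ^+ 2))) <= - (4 * lg).
  have -> : 4 * lg = (4 * (n%:R * eps0)) / (32 * V ^+ 2) by rewrite neps; field.
  rewrite mulrN lerN2 [X in _ <= X]mulrA; apply: ler_wpM2r => //.
  by rewrite invr_ge0; apply: mulr_ge0 => //; exact: ltW.
rewrite e1.
have -> : - (lg + lg) = (lg + lg) + - (4 * lg) by ring.
by rewrite lerD2l.
Qed.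
End Events.

End M8.
Import M8.

Module M9.

Lemma emp_diff (R : realType) (S A : finType) (Rw : S -> A -> R) (gamma : R) (n : nat)
  (data : {ffun 'I_n -> sample S A}) (f g : qfun R S A) (pi : policy R S A) :
  emp_loss Rw gamma data f f pi - emp_loss Rw gamma data g f pi =
  n%:R^-1 * \sum_i Zl Rw gamma pi f g (data i).
Proof. by rewrite /emp_loss -mulrBr -sumrB. Qed.


End M9.
Import M9.

Unset Implicit Arguments.
Theorem theorem2 (R : realType) :
  exists c0 c : R, 0 < c0 /\ 0 < c /\
  forall (S A : finType)
    (P : S -> A -> {ffun S -> R}) (Rw : S -> A -> R) (Rmax gamma : R)
    (d0 : {ffun S -> R}) (dD : {ffun S * A -> R})
    (F : seq (qfun R S A)) (Pi : seq (policy R S A)) (pi_cp : policy R S A)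
    (n : nat) (delta : R)
    (pi_hat : {ffun 'I_n -> sample S A} -> policy R S A),
  is_kernel P ->
  (forall s a, 0 <= Rw s a <= Rmax) ->
  0 <= gamma < 1 ->
  is_dist_S d0 ->
  is_dist_SA dD ->
  (forall pi, pi \in Pi -> is_policy pi) ->
  uniq F -> uniq Pi ->
  (forall f, f \in F -> forall x, 0 <= f x <= Rmax / (1 - gamma)) ->
  pi_cp \in Pi ->
  (* assumption (1) *)
  conc_finite P gamma d0 dD pi_cp ->
  (forall f, f \in F -> bellman P Rw gamma pi_cp f \in F) ->
  (* assumption (2) *)
  (forall pi, pi \in Pi -> Qpi P Rw gamma pi \in F) ->
  (0 < n)%N ->
  0 < delta < 1 ->
  let Vmax := Rmax / (1 - gamma) in
  let lg := ln ((size F)%:R * (size Pi)%:R / delta) in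
  let eps0 := c0 * Vmax ^+ 2 * lg / n%:R in
  (* pi_hat(data) is any (arbitrarily tie-broken) maximizer of J^-_VS over Pi *)
  (forall data, pi_hat data \in Pi /\
     forall pi, pi \in Pi ->
       (Jminus_VS Rw gamma d0 F eps0 data pi
          <= Jminus_VS Rw gamma d0 F eps0 data (pi_hat data))%E) ->
  prob_data P dD
    (fun data => Jpi P Rw gamma d0 pi_cp - Jpi P Rw gamma d0 (pi_hat data)
       <= c * (Vmax / (1 - gamma))
            * Num.sqrt (conc P gamma d0 dD pi_cp * lg / n%:R))
  >= 1 - delta.
Proof.
exists 32, 12; split; first lra. split; first lra.
move=> S A P Rw Rmax gamma d0 dD F Pi pi_cp n delta pi_hat HP HR Hg Hd0 HdD HPi uF uPi HF Hcp
  Hconc Hcompl Hreal Hn Hdelta Vmax lg eps0 Hhat.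
have g1 : 0 < 1 - gamma by case/andP: Hg => _ h; rewrite subr_gt0.
have HV : Rmax = (1 - gamma) * Vmax by rewrite /Vmax; field; rewrite lt0r_neq0.
have [s0 _] : exists s : S, true.
  case: (pickP (fun _ : S => true)) => [s _|hh]; first by exists s.
  exfalso; move: (proj2 Hd0); rewrite big_pred0 // => /eqP; by rewrite eq_sym oner_eq0.
have [a0 _] : exists a : A, true.
  case: (pickP (fun _ : A => true)) => [a _|hh]; first by exists a.
  exfalso; move: (proj2 (HPi _ Hcp s0)); rewrite big_pred0 // => /eqP; by rewrite eq_sym oner_eq0.
have Rm0 : 0 <= Rmax by case/andP: (HR s0 a0) => h1 h2; exact: le_trans h1 h2.
have V0 : 0 <= Vmax by rewrite /Vmax divr_ge0 // ltW.
have w0 := w0 HP HdD; have w1 := w1 HP HdD.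
have pe : forall E, prob_data P dD E = probD (wt P dD) E by [].
have RHS0 : 0 <= 12 * (Vmax / (1 - gamma)) *
     Num.sqrt (conc P gamma d0 dD pi_cp * lg / n%:R).
  apply: mulr_ge0; last exact: sqrtr_ge0.
  by apply: mulr_ge0 => //; apply: divr_ge0 => //; exact: ltW.
set E := fun d : {ffun 'I_n -> sample S A} =>
  Jpi P Rw gamma d0 pi_cp - Jpi P Rw gamma d0 (pi_hat d) <=
  12 * (Vmax / (1 - gamma)) * Num.sqrt (conc P gamma d0 dD pi_cp * lg / n%:R).
have dlt : 0 < delta < 1 by [].
case/andP: dlt => dl0 dl1.
have QcpF := Hreal _ Hcp.
have sF1 : (0 < size F)%N by move: QcpF; case: (F) => //.
case: (leqP (size Pi) 1) => hPi.
  rewrite pe.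
  have : probD (wt P dD) (fun _ : {ffun 'I_n -> sample S A} => true) <= probD (wt P dD) E.
    apply: (probD_mono w0) => d _; rewrite /E.
    have -> : pi_hat d = pi_cp by apply: (seq1_eq hPi) => //; case: (Hhat d).
    by rewrite subrr.
  have -> : probD (wt P dD) (fun _ : {ffun 'I_n -> sample S A} => true) = 1 by exact: probD_total.
  move=> h; apply: le_trans h; lra.
have Heps : eps0 = 32 * Vmax ^+ 2 * lg / n%:R by [].
set a := (size F)%:R : R.
set b := (size Pi)%:R : R.
have a1 : 1 <= a by rewrite /a ler1n.
have b2 : 2 <= b by rewrite /b ler_nat.
have M2 : 2 <= a * b by nra.
have xpos : 0 < a * b / delta by rewrite divr_gt0 //; lra.
have x1 : 1 <= a * b / delta by rewrite ler_pdivlMr // mul1r; lra.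
have lg0 : 0 <= lg by exact: ln_ge0.
set q := expR (- (lg + lg)).
have q0 : 0 <= q by exact: expR_ge0.
have qE : q = (a * b / delta * (a * b / delta))^-1.
  by rewrite /q expRN expRD /lg lnK // posrE.
set bad := fun d : {ffun 'I_n -> sample S A} =>
  has (fun pi => has (fun g => n%:R * eps0 < \sum_i Zl Rw gamma pi (Qpi P Rw gamma pi) g (d i)) F) Pi ||
  has (fun f => (4 * eps0 < mu dD f (bellman P Rw gamma pi_cp f)) &&
     (\sum_i Zl Rw gamma pi_cp f (bellman P Rw gamma pi_cp f) (d i) <= n%:R * eps0)) F.
have Pbad : probD (wt P dD) bad <= delta.
  apply: (le_trans (probD_or w0 _ _)).
  apply: (le_trans (y := \sum_(pi <- Pi) \sum_(g <- F) q + \sum_(f <- F) q)).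
    apply: lerD.
      apply: (le_trans (probD_has w0 _ _)).
      rewrite big_seq [X in _ <= X]big_seq; apply: ler_sum => pi hpi.
      apply: (le_trans (probD_has w0 _ _)).
      rewrite big_seq [X in _ <= X]big_seq; apply: ler_sum => g hg.
      exact: (prob_B1 HP HR Hg HV HdD Hn lg0 Heps (HPi _ hpi) (HF _ (Hreal _ hpi)) (HF _ hg)).
    apply: (le_trans (probD_has w0 _ _)).
    rewrite big_seq [X in _ <= X]big_seq; apply: ler_sum => f hf.
    exact: (prob_B2 HP HR Hg HV HdD Hn Heps (HPi _ Hcp) (HF _ hf) (HF _ (Hcompl _ hf))).
  rewrite !sum_const_seq -/a -/b.
  have -> : b * (a * q) + a * q = (a * b + a) * q by ring.
  have h1 : a * b + a <= 2 * (a * b) by nra.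
  apply: (le_trans (ler_wpM2r q0 h1)).
  have -> : 2 * (a * b) * q = 2 * delta ^+ 2 / (a * b).
    rewrite qE; field; rewrite -/a -/b; apply/and3P; split; apply: lt0r_neq0; lra.
  rewrite ler_pdivrMr; last lra.
  nra.
have Hgood : forall d, ~~ bad d -> E d.
  move=> d; rewrite /bad negb_or => /andP[nb1 nb2].
  have G1 : forall pi, pi \in Pi -> forall g, g \in F ->
      \sum_i Zl Rw gamma pi (Qpi P Rw gamma pi) g (d i) <= n%:R * eps0.
    move=> pi hpi g hg; move/hasPn: nb1 => /(_ pi hpi) /hasPn /(_ g hg).
    by rewrite leNgt.
  have G2 : forall f, f \in F ->
      \sum_i Zl Rw gamma pi_cp f (bellman P Rw gamma pi_cp f) (d i) <= n%:R * eps0 ->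
      mu dD f (bellman P Rw gamma pi_cp f) <= 4 * eps0.
    move=> f hf hs; move/hasPn: nb2 => /(_ f hf); rewrite hs andbT.
    by rewrite leNgt.
  have nR : 0 < n%:R :> R by rewrite ltr0n.
  have eps00 : 0 <= eps0.
    rewrite Heps; apply: divr_ge0; last exact: ler0n.
    by apply: mulr_ge0 => //; apply: mulr_ge0; [lra | exact: sqr_ge0].
  have emp_le : forall pi f, (forall g, g \in F -> \sum_i Zl Rw gamma pi f g (d i) <= n%:R * eps0) ->
      emp_err Rw gamma F d f pi <= eps0.
    move=> pi f h; rewrite /emp_err big_seq; apply: bigmax_le => // g hg.
    by rewrite emp_diff mulrC ler_pdivrMr // mulrC; exact: h.
  have emp_ge : forall pi f g, g \in F ->
      n%:R^-1 * \sum_i Zl Rw gamma pi f g (d i) <= emp_err Rw gamma F d f pi.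
    move=> pi f g hg; rewrite -emp_diff /emp_err; exact: (le_bigmax_seq 0 g xpredT _ hg).
  case: (Hhat d) => hph hmax.
  set pih := pi_hat d.
  have Jm1 : (Jminus_VS Rw gamma d0 F eps0 d pih <= (Jf d0 (Qpi P Rw gamma pih) pih)%:E)%E.
    apply: bigmine_le; first exact: Hreal.
    by apply: emp_le => g hg; exact: G1.
  have hasc : has (fun f => emp_err Rw gamma F d f pi_cp <= eps0) F.
    apply/hasP; exists (Qpi P Rw gamma pi_cp) => //; apply: emp_le => g hg; exact: G1.
  case: (bigmine_att (fun f => Jf d0 f pi_cp) hasc) => fs /andP[fsF fsP] fsE.
  have Jm2 := hmax _ Hcp.
  have hJ : Jf d0 fs pi_cp <= Jpi P Rw gamma d0 pih.
    rewrite (J_eq_JQ d0 HP HR Hg (HPi _ hph)) -lee_fin -fsE.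
    exact: (le_trans Jm2 Jm1).
  have fs_s : \sum_i Zl Rw gamma pi_cp fs (bellman P Rw gamma pi_cp fs) (d i) <= n%:R * eps0.
    have := le_trans (emp_ge pi_cp fs _ (Hcompl _ fsF)) fsP.
    by rewrite mulrC ler_pdivrMr // mulrC.
  have mus := G2 _ fsF fs_s.
  have hfs := HF _ fsF.
  have pd := perf_diff HP HR Hg Hd0 (HPi _ Hcp) hfs.
  have cb := conc_bound (fun x => bellman P Rw gamma pi_cp fs x - fs x) HdD Hconc
    (dpi_ge0 HP Hg Hd0 (HPi _ Hcp)) (dpi_sum HP Hg Hd0 (HPi _ Hcp)).
  rewrite pd in cb.
  have C0 : 0 <= conc P gamma d0 dD pi_cp.
    rewrite /conc; apply: (big_ind (fun x => 0 <= x)) => //.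
      by move=> x y hx hy; rewrite le_max hx.
    move=> x _; apply: divr_ge0; first exact: (dpi_ge0 HP Hg Hd0 (HPi _ Hcp)).
    by case: HdD.
  have muE : \sum_x dD x * (bellman P Rw gamma pi_cp fs x - fs x) ^+ 2 =
      mu dD fs (bellman P Rw gamma pi_cp fs).
    by rewrite /mu; apply: eq_bigr => x _; congr (_ * _); ring.
  rewrite muE in cb.
  set C := conc P gamma d0 dD pi_cp in cb C0 *.
  set X := C * lg / n%:R.
  have X0 : 0 <= X by rewrite /X; apply: divr_ge0; [exact: mulr_ge0 | exact: ler0n].
  have key : (1 - gamma) * (Jpi P Rw gamma d0 pi_cp - Jf d0 fs pi_cp) <= 12 * Vmax * Num.sqrt X.
    apply: (le_trans cb).
    have -> : 12 * Vmax * Num.sqrt X = Num.sqrt (144 * Vmax ^+ 2 * X).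
      rewrite (@sqrtrM _ (144 * Vmax ^+ 2) X); last by apply: mulr_ge0; [lra | exact: sqr_ge0].
      have -> : 144 * Vmax ^+ 2 = (12 * Vmax) ^+ 2 by ring.
      by rewrite sqrtr_sqr ger0_norm //; apply: mulr_ge0 => //; lra.
    rewrite ler_sqrt; last by apply: mulr_ge0 => //; apply: mulr_ge0; [lra | exact: sqr_ge0].
    have h1 := ler_wpM2l C0 mus.
    have h2 : C * (4 * eps0) = 128 * Vmax ^+ 2 * X.
      by rewrite Heps /X; field; rewrite pnatr_eq0 -lt0n.
    have h3 : 128 * Vmax ^+ 2 * X <= 144 * Vmax ^+ 2 * X.
      apply: ler_wpM2r => //; apply: ler_wpM2r; [exact: sqr_ge0 | lra].
    by rewrite -h2 in h3; exact: le_trans h1 h3.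
  rewrite /E -/C -/X.
  have -> : 12 * (Vmax / (1 - gamma)) * Num.sqrt X = (12 * Vmax * Num.sqrt X) / (1 - gamma).
    by field; exact: lt0r_neq0.
  rewrite ler_pdivlMr //.
  apply: le_trans key; rewrite mulrC; apply: ler_wpM2l; first exact: ltW.
  by rewrite lerD2l lerN2.
rewrite pe.
have hc := probD_compl w1 bad.
have hm : probD (wt P dD) (fun d => ~~ bad d) <= probD (wt P dD) E := probD_mono w0 Hgood.
lra.
Qed.
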